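(* Let $(a_{ij})_{1\le i\le v,\,1\le j\le w}$ be a matrix of nonnegative real numbers and let $\rho,\gamma\ge 0$. Put $a_{i\star}=\sum_{j=1}^w a_{ij}$, $a_{\star j}=\sum_{i=1}^v a_{ij}$ and $e=\sum_{i=1}^v\sum_{j=1}^w a_{ij}$. If $a_{i\star}\ge 2\rho$ for all $i$ and $a_{\star j}\ge 2\gamma$ for all $j$, then $$\sum_{i=1}^v\sum_{j=1}^w a_{ij}(a_{i\star}-\rho)(a_{\star j}-\gamma)\ge e\,(e/v-\rho)(e/w-\gamma),$$ with equality exactly if all $a_{i\star}$ are equal to one another and all $a_{\star j}$ are equal to one another. *)

(* Defs.v *)
From mathcomp Require Import all_boot all_order all_algebra.
Set Implicit Arguments. Unset Strict Implicit. Unset Printing Implicit Defensive.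
Import Order.TTheory GRing.Theory Num.Theory.
Local Open Scope ring_scope.

Definition rowsum (R : realFieldType) (v w : nat) (a : 'M[R]_(v, w)) (i : 'I_v) : R :=
  \sum_(j < w) a i j.
Definition colsum (R : realFieldType) (v w : nat) (a : 'M[R]_(v, w)) (j : 'I_w) : R :=
  \sum_(i < v) a i j.
Definition esum (R : realFieldType) (v w : nat) (a : 'M[R]_(v, w)) : R :=
  \sum_(i < v) \sum_(j < w) a i j.

(* Main.v *)
Require Import Defs.
From mathcomp Require Import all_boot all_order all_algebra.
From mathcomp Require Import ring lra.
Set Implicit Arguments. Unset Strict Implicit. Unset Printing Implicit Defensive.
Import Order.TTheory GRing.Theory Num.Theory.
Local Open Scope ring_scope.
Definition Pf (F : realFieldType) (r c RR C rho g : F) :=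
  (C-g)*(r-RR)^+2*c + (RR-rho)*(c-C)^+2*r + (r-RR)*(c-C)*r*c.

Lemma Pf_half (F : realFieldType) (r c RR C rho g : F) :
  0<r -> 0<c -> 0<=rho -> 0<=g -> 2*rho <= r -> 2*g <= c -> 2*rho <= RR -> 2*g <= C ->
  0 < r-RR -> c - C < 0 -> 0 < Pf r c RR C rho g.
Proof.
move=> r0 c0 rh0 g0 hr hc hR hC hd he.
set d := r - RR. set s := C - c.
have Ed : RR = r - d by rewrite /d; ring.
have Es : C = c + s by rewrite /s; ring.
have s0 : 0 <= s by rewrite /s; lra.
have HP : Pf r c RR C rho g >= (s + c/2)*d^+2*c + (RR/2)*s^+2*r - d*s*r*c.
  rewrite /Pf -/d.
  have -> : c - C = - s by rewrite /s; ring.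
  have h1 : (s + c/2) * d^+2 * c <= (C-g)*d^+2*c.
    apply: ler_wpM2r; first lra. apply: ler_wpM2r; first by rewrite sqr_ge0.
    lra.
  have h2 : (RR/2) * s^+2 * r <= (RR-rho)*(-s)^+2*r.
    rewrite sqrrN. apply: ler_wpM2r; first lra. apply: ler_wpM2r; first by rewrite sqr_ge0.
    lra.
  have -> : d * - s * r * c = - (d*s*r*c) by ring.
  lra.
have Hid : 2 * r * ((s + c/2)*d^+2*c + (RR/2)*s^+2*r - d*s*r*c)
          = (r - d) * (s*r - d*c)^+2 + d^+3 * c^+2.
  by rewrite Ed; field.
have : 0 < (r - d) * (s*r - d*c)^+2 + d^+3 * c^+2.
  apply: ltr_wpDl; [apply: mulr_ge0; [lra| exact: sqr_ge0]|].
  apply: mulr_gt0; [exact: exprn_gt0 | exact: exprn_gt0].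
have h2r : 0 < 2 * r by lra.
rewrite -Hid (pmulr_rgt0 _ h2r). lra.
Qed.

Lemma Pf_sym (F : realFieldType) (r c RR C rho g : F) :
  Pf r c RR C rho g = Pf c r C RR g rho.
Proof. rewrite /Pf; ring. Qed.

Lemma zlem (F : realFieldType) (x y z : F) : 0 < x -> 0 < y -> x * z * y = 0 -> z = 0.
Proof.
move=> x0 y0 /eqP; rewrite !mulf_eq0 => /orP[/orP[]|] /eqP; try lra; done.
Qed.

Lemma Pf_ok (F : realFieldType) (r c RR C rho g : F) :
  0<r -> 0<c -> 0<=rho -> 0<=g -> 2*rho <= r -> 2*g <= c -> 2*rho <= RR -> 2*g <= C ->
  (0 <= Pf r c RR C rho g) /\ (0 < RR -> 0 < C -> Pf r c RR C rho g = 0 -> r = RR /\ c = C).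
Proof.
move=> r0 c0 rh0 g0 hr hc hR hC.
have [hp|hp] := leP 0 ((r - RR) * (c - C)).
- have t1 : 0 <= (C-g)*(r-RR)^+2*c by apply: mulr_ge0; [apply: mulr_ge0; [lra|exact: sqr_ge0]|lra].
  have t2 : 0 <= (RR-rho)*(c-C)^+2*r by apply: mulr_ge0; [apply: mulr_ge0; [lra|exact: sqr_ge0]|lra].
  have t3 : 0 <= (r-RR)*(c-C)*r*c by apply: mulr_ge0; [apply: mulr_ge0|]; lra.
  split; first by rewrite /Pf; lra.
  move=> RR0 C0; rewrite /Pf => P0.
  have z1 : (C-g)*(r-RR)^+2*c = 0 by lra.
  have z2 : (RR-rho)*(c-C)^+2*r = 0 by lra.
  split.
  + have := zlem (_ : 0 < C - g) c0 z1; move=> /(_ ltac:(lra)) /eqP; rewrite sqrf_eq0 subr_eq0 => /eqP //.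
  + have := zlem (_ : 0 < RR - rho) r0 z2; move=> /(_ ltac:(lra)) /eqP; rewrite sqrf_eq0 subr_eq0 => /eqP //.
- suff : 0 < Pf r c RR C rho g by move=> H; split; [lra | move=> _ _ H0; lra].
  have [hd|hd] := leP 0 (r - RR).
  + have hd' : 0 < r - RR.
      rewrite lt_def hd andbT; apply/negP => /eqP H; move: hp; rewrite H mul0r; lra.
    have he : c - C < 0.
      rewrite ltNge; apply/negP => he; move: hp; rewrite ltNge mulr_ge0 //; lra.
    exact: Pf_half.
  + have he : 0 < c - C.
      rewrite ltNge; apply/negP => he; move: hp; rewrite ltNge.
      have -> : (r - RR) * (c - C) = (RR - r) * (C - c) by ring.
      rewrite mulr_ge0 //; lra.
    rewrite Pf_sym; apply: Pf_half => //; lra.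
Qed.


Lemma sum_sub_mean (F : realFieldType) (n : nat) (x : 'I_n -> F) :
  (0 < n)%N -> \sum_(i < n) (x i - (\sum_(k < n) x k) / n%:R) = 0.
Proof.
move=> n0; rewrite sumrB sumr_const card_ord.
have hn : n%:R != 0 :> F by rewrite pnatr_eq0 -lt0n.
by rewrite -[_ *+ n]mulr_natr divfK // subrr.
Qed.

Lemma mean_ge (F : realFieldType) (n : nat) (x : 'I_n -> F) (m : F) :
  (0 < n)%N -> (forall i, m <= x i) -> m <= (\sum_(k < n) x k) / n%:R.
Proof.
move=> n0 hx.
have hn : 0 < n%:R :> F by rewrite ltr0n.
rewrite ler_pdivlMr //.
have : \sum_(k < n) m <= \sum_(k < n) x k by apply: ler_sum => i _.
by rewrite sumr_const card_ord -[_ *+ n]mulr_natr.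
Qed.

Lemma const_mean (F : realFieldType) (n : nat) (x : 'I_n -> F) :
  (0 < n)%N -> (forall i i', x i = x i') -> forall i, x i = (\sum_(k < n) x k) / n%:R.
Proof.
move=> n0 hx i.
have hn : n%:R != 0 :> F by rewrite pnatr_eq0 -lt0n.
rewrite (eq_bigr (fun _ => x i)); last by move=> k _; rewrite (hx k i).
by rewrite sumr_const card_ord -[_ *+ n]mulr_natr mulfK.
Qed.

Theorem theorem4p4 (R : realFieldType) (v w : nat) (a : 'M[R]_(v, w)) (rho gamma : R) :
  (0 < v)%N -> (0 < w)%N ->
  (forall i j, 0 <= a i j) -> 0 <= rho -> 0 <= gamma ->
  (forall i, 2 * rho <= rowsum a i) ->
  (forall j, 2 * gamma <= colsum a j) ->
  esum a * (esum a / v%:R - rho) * (esum a / w%:R - gamma)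
    <= \sum_(i < v) \sum_(j < w) a i j * (rowsum a i - rho) * (colsum a j - gamma)
  /\
  (\sum_(i < v) \sum_(j < w) a i j * (rowsum a i - rho) * (colsum a j - gamma)
     = esum a * (esum a / v%:R - rho) * (esum a / w%:R - gamma)
   <-> (forall i i', rowsum a i = rowsum a i') /\ (forall j j', colsum a j = colsum a j')).
Proof.
move=> v0 w0 a0 rho0 g0 hrow hcol.
have eR : esum a = \sum_i rowsum a i by [].
have eC : esum a = \sum_j colsum a j by rewrite /esum exchange_big.
have r0 i : 0 <= rowsum a i by apply: sumr_ge0.
have c0 j : 0 <= colsum a j by apply: sumr_ge0.
have ar i j : a i j <= rowsum a i.
  rewrite /rowsum (bigD1 j) //= lerDl; exact: sumr_ge0.
have ac i j : a i j <= colsum a j.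
  rewrite /colsum (bigD1 i) //= lerDl; exact: sumr_ge0.
have RRge : 2 * rho <= esum a / v%:R by rewrite eR; apply: mean_ge.
have CCge : 2 * gamma <= esum a / w%:R by rewrite eC; apply: mean_ge.
have sR : \sum_i (rowsum a i - esum a / v%:R) = 0 by rewrite eR sum_sub_mean.
have sC : \sum_j (colsum a j - esum a / w%:R) = 0 by rewrite eC sum_sub_mean.
move: RRge CCge sR sC.
set e := esum a. set RR := e / v%:R. set CC := e / w%:R.
set r := rowsum a. set c := colsum a.
move=> RRge CCge sR sC.
set U := RR - rho. set T := CC - gamma.
pose D1 := \sum_(i < v) \sum_(j < w) a i j * ((r i - RR) / r i).
pose D2 := \sum_(i < v) \sum_(j < w) a i j * ((c j - CC) / c j).
pose D3 := \sum_(i < v) \sum_(j < w) a i j * (Pf (r i) (c j) RR CC rho gamma / (r i * c j)).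
have dec i j : a i j * (r i - rho) * (c j - gamma) = a i j * (U * T) + T * RR * (a i j * ((r i - RR) / r i))
   + U * CC * (a i j * ((c j - CC) / c j)) + a i j * (Pf (r i) (c j) RR CC rho gamma / (r i * c j)).
  have [->|anz] := eqVneq (a i j) 0; first by rewrite !(mul0r, mulr0, addr0).
  have ri : r i != 0 by rewrite gt_eqF //; apply: lt_le_trans (ar i j); rewrite lt_def anz a0.
  have cj : c j != 0 by rewrite gt_eqF //; apply: lt_le_trans (ac i j); rewrite lt_def anz a0.
  rewrite /Pf /U /T; field.
  by rewrite ri cj.
have Sdec : \sum_(i < v) \sum_(j < w) a i j * (r i - rho) * (c j - gamma)
    = e * (U * T) + T * RR * D1 + U * CC * D2 + D3.
  rewrite (eq_bigr (fun i => \sum_(j < w) (a i j * (U * T) + T * RR * (a i j * ((r i - RR) / r i))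
   + U * CC * (a i j * ((c j - CC) / c j)) + a i j * (Pf (r i) (c j) RR CC rho gamma / (r i * c j)))));
    last by move=> i _; apply: eq_bigr => j _; exact: dec.
  under eq_bigr => i _ do rewrite !big_split /= -!mulr_sumr.
  rewrite !big_split /= -!mulr_sumr; congr (_ + _ + _ + _).
  under eq_bigr => i _ do rewrite -mulr_suml.
  by rewrite -mulr_suml.
have RR0 : 0 <= RR by move: (RRge); lra.
have CC0 : 0 <= CC by move: (CCge); lra.
have U0 : 0 <= U by rewrite /U; lra.
have T0 : 0 <= T by rewrite /T; lra.
have gl (x M : R) : 0 <= x -> 0 <= M -> x - M <= x * ((x - M) / x) /\ (0 < M -> x * ((x - M) / x) = x - M -> 0 < x).
  move=> x0 M0; have [->|xn] := eqVneq x 0.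
    by rewrite !mul0r; split; [lra| move=> ? ?; lra].
  rewrite mulrC divfK //; split=> // _ _; rewrite lt_def xn; exact: x0.
have D1E : D1 = \sum_i (r i * ((r i - RR) / r i) - (r i - RR)).
  rewrite sumrB sR subr0 /D1; apply: eq_bigr => i _; by rewrite -mulr_suml.
have D2E : D2 = \sum_j (c j * ((c j - CC) / c j) - (c j - CC)).
  rewrite sumrB sC subr0 /D2 exchange_big; apply: eq_bigr => j _; by rewrite -mulr_suml.
have D1t i : 0 <= r i * ((r i - RR) / r i) - (r i - RR).
  have [h _] := gl (r i) RR (r0 i) RR0; lra.
have D2t j : 0 <= c j * ((c j - CC) / c j) - (c j - CC).
  have [h _] := gl (c j) CC (c0 j) CC0; lra.
have D10 : 0 <= D1 by rewrite D1E; apply: sumr_ge0 => i _.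
have D20 : 0 <= D2 by rewrite D2E; apply: sumr_ge0 => j _.
have pos i j : a i j != 0 -> 0 < r i /\ 0 < c j.
  move=> anz; have ap : 0 < a i j by rewrite lt_def anz a0.
  split; [exact: lt_le_trans (ar i j) | exact: lt_le_trans (ac i j)].
have D3t i j : 0 <= a i j * (Pf (r i) (c j) RR CC rho gamma / (r i * c j)).
  have [->|anz] := eqVneq (a i j) 0; first by rewrite mul0r.
  have [ri cj] := pos i j anz.
  have [P0 _] := Pf_ok ri cj rho0 g0 (hrow i) (hcol j) RRge CCge.
  apply: mulr_ge0 => //; apply: divr_ge0 => //; exact: mulr_ge0.
have D30 : 0 <= D3 by apply: sumr_ge0 => i _; apply: sumr_ge0 => j _.
have X1 : 0 <= T * RR * D1 by do 2 apply: mulr_ge0 => //.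
have X2 : 0 <= U * CC * D2 by do 2 apply: mulr_ge0 => //.
rewrite Sdec -/U -/T mulrA; split; first lra.
split.
- move=> H.
  have Z1 : T * RR * D1 = 0 by lra.
  have Z2 : U * CC * D2 = 0 by lra.
  have Z3 : D3 = 0 by lra.
  have [e0|enz] := eqVneq e 0.
    have hr i : r i = 0.
      by apply: (psumr_eq0P (P:=xpredT) (F:=r) (fun i _ => r0 i)) => //; exact: e0.
    have hc j : c j = 0.
      by apply: (psumr_eq0P (P:=xpredT) (F:=c) (fun j _ => c0 j)) => //; rewrite -eC.
    by split=> [i i'|j j']; rewrite ?hr ?hc.
  have ep : 0 < e by rewrite lt_def enz /e /esum /=; apply: sumr_ge0 => i _; exact: r0.
  have RRp : 0 < RR by apply: divr_gt0 => //; rewrite ltr0n.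
  have CCp : 0 < CC by apply: divr_gt0 => //; rewrite ltr0n.
  have Up : 0 < U by rewrite /U; lra.
  have Tp : 0 < T by rewrite /T; lra.
  have D1z : D1 = 0.
    have nz : T * RR != 0 by rewrite mulf_neq0 // gt_eqF.
    by move/eqP: Z1; rewrite mulf_eq0 (negbTE nz) /= => /eqP.
  have D2z : D2 = 0.
    have nz : U * CC != 0 by rewrite mulf_neq0 // gt_eqF.
    by move/eqP: Z2; rewrite mulf_eq0 (negbTE nz) /= => /eqP.
  have D3z i j : a i j * (Pf (r i) (c j) RR CC rho gamma / (r i * c j)) = 0.
    have Hi := @psumr_eq0P _ _ xpredT
      (fun i => \sum_(j < w) a i j * (Pf (r i) (c j) RR CC rho gamma / (r i * c j)))
      (fun i _ => sumr_ge0 _ (fun j _ => D3t i j)) Z3 i isT.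
    exact: (@psumr_eq0P _ _ xpredT
      (fun j => a i j * (Pf (r i) (c j) RR CC rho gamma / (r i * c j)))
      (fun j _ => D3t i j) Hi j isT).
  have Pz i j : a i j != 0 -> r i = RR /\ c j = CC.
    move=> anz; have [ri cj] := pos i j anz.
    have [_ P1] := Pf_ok ri cj rho0 g0 (hrow i) (hcol j) RRge CCge.
    apply: P1 => //.
    move/eqP: (D3z i j); rewrite mulf_eq0 (negbTE anz) /= mulf_eq0 invr_eq0 mulf_eq0.
    rewrite (gt_eqF ri) (gt_eqF cj) /= orbF => /eqP //.
  have rowRR i : r i = RR.
    have := @psumr_eq0P _ _ xpredT (fun i => r i * ((r i - RR) / r i) - (r i - RR)) (fun i _ => D1t i) _ i isT; rewrite -D1E => /(_ D1z) Ei.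
    have [_ G] := gl (r i) RR (r0 i) RR0.
    have ri : 0 < r i by apply: G => //; lra.
    case: (pickP (fun j => a i j != 0)) => [j /= anz | none].
      by have [] := Pz i j anz.
    have : r i = 0.
      rewrite /r /rowsum big1 // => j _; move: (none j) => /= /negbFE /eqP //.
    lra.
  have colCC j : c j = CC.
    have := @psumr_eq0P _ _ xpredT (fun j => c j * ((c j - CC) / c j) - (c j - CC)) (fun j _ => D2t j) _ j isT; rewrite -D2E => /(_ D2z) Ej.
    have [_ G] := gl (c j) CC (c0 j) CC0.
    have cj : 0 < c j by apply: G => //; lra.
    case: (pickP (fun i => a i j != 0)) => [i /= anz | none].
      by have [] := Pz i j anz.
    have : c j = 0.
      rewrite /c /colsum big1 // => i _; move: (none i) => /= /negbFE /eqP //.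
    lra.
  by split=> [i i'|j j']; rewrite ?rowRR ?colCC.
- move=> [hr hc].
  have rowRR i : r i = RR by rewrite /RR /e eR; apply: const_mean.
  have colCC j : c j = CC by rewrite /CC /e eC; apply: const_mean.
  have D1z : D1 = 0 by rewrite D1E big1 // => i _; rewrite rowRR subrr mul0r mulr0 subrr.
  have D2z : D2 = 0 by rewrite D2E big1 // => j _; rewrite colCC subrr mul0r mulr0 subrr.
  have D3z : D3 = 0.
    rewrite /D3 big1 // => i _; rewrite big1 // => j _.
    by rewrite rowRR colCC /Pf !subrr !(mul0r, mulr0, expr0n, add0r, addr0).
  by rewrite D1z D2z D3z !mulr0 !addr0.
Qed.
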